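(* Let $f:\{0,1\}^n\to\{0,1\}^m$ and let $S=((\Lambda,\Gamma),(s_0,\dots,s_{k-1}))$ be a step CRN all of whose rules are $(2,0)$ rules. Suppose that for each input bit $x_i$ and each output bit $y_j$ there are species $0_{x_i},1_{x_i},0_{y_j},1_{y_j}$ (these $2n+2m$ species pairwise distinct) and nonnegative integers $c_{0,x_i},c_{1,x_i},c_{0,y_j},c_{1,y_j}$, such that for every input $b\in\{0,1\}^n$: the step CRN with steps $(s_0+X(b),s_1,\dots,s_{k-1})$, where $X(b)$ consists of exactly $c_{b_i,x_i}$ copies of $(b_i)_{x_i}$ and zero copies of $(1-b_i)_{x_i}$ for each $i$, has the property that every configuration in $\mathrm{TERM}_k$ contains, for each $j$, at least $c_{a,y_j}$ copies of $a_{y_j}$ and zero copies of $(1-a)_{y_j}$, where $a=f(b)_j$. Suppose further that $b,b'\in\{0,1\}^n$ differ only in coordinate $j_0$ and that $f(b)$ and $f(b')$ differ exactly in the coordinates $i_1,\dots,i_t$. Writing $C(z)=c_{0,z}+c_{1,z}$, we have $C(x_{j_0})\ge\sum_{r=1}^t C(y_{i_r})$.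
   Context: A configuration over an ordered alphabet of species $\Lambda$ is a vector in $\mathbb{Z}_{\ge 0}^{|\Lambda|}$ of copy counts. A $(2,0)$ rule has the form $A+B\to\emptyset$ (possibly $A=B$). A configuration is terminal if no rule applies. A step CRN with $k$ steps is $((\Lambda,\Gamma),(s_0,\dots,s_{k-1}))$; $\mathrm{REACH}_1$ is the set of configurations reachable by finitely many rule applications from $s_0$ and $\mathrm{TERM}_1$ its terminal elements; for $i\ge2$, $\mathrm{REACH}_i$ is the set of configurations reachable from $T+s_{i-1}$ for some $T\in\mathrm{TERM}_{i-1}$, and $\mathrm{TERM}_i$ its terminal elements. *)

(* Defs.v *)
From mathcomp Require Import all_boot.
Set Implicit Arguments. Unset Strict Implicit. Unset Printing Implicit Defensive.

(* Species: the ordered alphabet Lambda = 'I_L.  Configurations: copy counts. *)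
Definition config (L : nat) := 'I_L -> nat.

Definition cadd L (c d : config L) : config L := fun s => c s + d s.

(* A (2,0) rule A + B -> 0 is the pair (A, B) (possibly A = B). *)
Definition rule L := ('I_L * 'I_L)%type.

Definition consumed L (r : rule L) (s : 'I_L) : nat := (s == r.1) + (s == r.2).

Definition applicable L (r : rule L) (c : config L) : Prop :=
  forall s, consumed r s <= c s.

Definition step1 L (G : seq (rule L)) (c c' : config L) : Prop :=
  exists2 r, r \in G & applicable r c /\ forall s, c' s + consumed r s = c s.

Inductive reach L (G : seq (rule L)) : config L -> config L -> Prop :=
| reach_refl c : reach G c c
| reach_step c c' c'' : step1 G c c' -> reach G c' c'' -> reach G c c''.

Definition terminal L (G : seq (rule L)) (c : config L) : Prop :=
  forall r, r \in G -> ~ applicable r c.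

(* Given the set P = TERM_{i-1}, and remaining steps, compute the final TERM. *)
Fixpoint TERMfrom L (G : seq (rule L)) (P : config L -> Prop) (steps : seq (config L))
  : config L -> Prop :=
  match steps with
  | [::] => P
  | s :: rest =>
      TERMfrom G (fun c => exists T c0, [/\ P T, (forall x, c0 x = T x + s x),
                                             reach G c0 c & terminal G c]) rest
  end.

(* TERM_k of the step CRN ((Lambda,G),(s0, s1, ..., s_{k-1})), rest = (s1,...,s_{k-1}).
   TERM_1 = terminal configurations reachable from s0 (= 0 + s0). *)
Definition TERMk L (G : seq (rule L)) (s0 : config L) (rest : seq (config L))
  : config L -> Prop :=
  TERMfrom G (fun c => forall x, c x = 0) (s0 :: rest).

Definition Xin L n (sx : bool -> 'I_n -> 'I_L) (cx : bool -> 'I_n -> nat)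
  (b : {ffun 'I_n -> bool}) : config L :=
  fun s => \sum_(i < n) (s == sx (b i) i) * cx (b i) i.

(* Main.v *)
Require Import Defs.
From mathcomp Require Import all_boot zify.
From Stdlib Require Import Classical.
Set Implicit Arguments. Unset Strict Implicit. Unset Printing Implicit Defensive.

Definition dist L (c d : config L) := \sum_(s < L) (c s - d s + (d s - c s)).

Lemma dist_sym L (c d : config L) : dist c d = dist d c.
Proof. by apply: eq_bigr => s _; rewrite addnC. Qed.

Lemma sum_consumed L (r : rule L) : \sum_(s < L) consumed r s = 2.
Proof.
rewrite /consumed big_split /=.
have H (p : 'I_L) : \sum_(s < L) (s == p) = 1.
  rewrite (bigD1 p) //= eqxx big1 // => s /negbTE ->. done.
by rewrite !H.
Qed.

Lemma sum_ind L (p : 'I_L) a : \sum_(s < L) ((s == p) * a) = a.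
Proof. rewrite (bigD1 p) //= eqxx mul1n big1 ?addn0 // => s /negbTE -> //. Qed.

Lemma consumed_le2 L (r : rule L) s : consumed r s <= 2.
Proof. rewrite /consumed; case: (s == r.1); case: (s == r.2) => //. Qed.

Lemma KL L (r : rule L) (c c' d : config L) :
  applicable r c -> ~ applicable r c' -> (forall s, d s + consumed r s = c s) ->
  dist d c' <= dist c c'.
Proof.
move=> Ha Hna Hd.
have [s0 Hs0] : exists s0, c' s0 < consumed r s0.
  apply: NNPP => H; apply: Hna => s; apply: NNPP => H2; apply: H; exists s.
  by rewrite ltnNge; apply/negP.
rewrite -(leq_add2r 2).
apply: (@leq_trans (\sum_(s < L) (c s - c' s + (c' s - c s) + consumed r s))).
  rewrite -[X in _ + X <= _](sum_ind s0 2) -big_split /=.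
  apply: leq_sum => s _.
  have := Hd s; have := Ha s; have := consumed_le2 r s.
  case: eqP => [->|_] /=; lia.
by rewrite big_split /= sum_consumed.
Qed.

Lemma dist_eq L (k c c' d d' : config L) :
  (forall s, d s + k s = c s) -> (forall s, d' s + k s = c' s) ->
  dist d d' = dist c c'.
Proof. move=> H1 H2; apply: eq_bigr => s _; have := H1 s; have := H2 s; lia. Qed.
Definition size L (c : config L) := \sum_(s < L) c s.

Lemma P2 L (G : seq (rule L)) N (c' : config L) : size c' <= N ->
  exists U', [/\ reach G c' U', terminal G U' &
    forall U, terminal G U -> dist U U' <= dist U c'].
Proof.
elim: N c' => [|N IH] c' Hs.
  exists c'; split => //; first by constructor.
  move=> r _ Ha; move: (sum_consumed r) (Hs).
  have: \sum_(s < L) consumed r s <= size c' by apply: leq_sum => s _; apply: Ha.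
  lia.
case: (classic (terminal G c')) => Ht.
  by exists c'; split => //; constructor.
have [r [Hr Ha]] : exists r, r \in G /\ applicable r c'.
  apply: NNPP => H; apply: Ht => r Hr Ha; apply: H; by exists r.
pose d := fun s => c' s - consumed r s.
have Hd : forall s, d s + consumed r s = c' s by move=> s; rewrite /d subnK //; apply: Ha.
have Hsd : size d + 2 = size c'.
  by rewrite /size -(sum_consumed r) -big_split; apply: eq_bigr => s _; apply: Hd.
have [U' [HR HT HD]] : exists U', [/\ reach G d U', terminal G U' &
    forall U, terminal G U -> dist U U' <= dist U d].
  apply: IH; lia.
exists U'; split => //.
  by apply: reach_step HR; exists r.
move=> U HU; apply: leq_trans (HD U HU) _.
rewrite dist_sym [X in _ <= X]dist_sym.
by apply: (KL Ha (HU r Hr)).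
Qed.

Lemma Sim L (G : seq (rule L)) (c0 c : config L) : reach G c0 c -> terminal G c ->
  forall c0', exists c', [/\ reach G c0' c', terminal G c' & dist c c' <= dist c0 c0'].
Proof.
elim=> {c0 c} [c|c0 d c [r Hr [Ha Hd]] _ IH] Ht c0'.
  have [U' [H1 H2 H3]] := P2 G (leqnn (size c0')).
  by exists U'; split => //; apply: H3.
case: (classic (applicable r c0')) => Ha'.
  pose d' := fun s => c0' s - consumed r s.
  have Hd' : forall s, d' s + consumed r s = c0' s by move=> s; rewrite /d' subnK //; apply: Ha'.
  have [c' [H1 H2 H3]] := IH Ht d'.
  exists c'; split => //; first by apply: reach_step H1; exists r.
  by rewrite (dist_eq Hd Hd') in H3.
have [c' [H1 H2 H3]] := IH Ht c0'.
exists c'; split => //; apply: leq_trans H3 _.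
exact: KL Ha Ha' Hd.
Qed.

Definition Stage L (G : seq (rule L)) (P : config L -> Prop) (s : config L) :=
  fun c => exists T c0, [/\ P T, (forall x, c0 x = T x + s x), reach G c0 c & terminal G c].

Lemma TERMfrom_cons L (G : seq (rule L)) P s rest :
  TERMfrom G P (s :: rest) = TERMfrom G (Stage G P s) rest.
Proof. by []. Qed.

Lemma stage_rel L (G : seq (rule L)) P P' s s' delta :
  (forall T, P T -> exists T', P' T' /\ dist (cadd T s) (cadd T' s') <= delta) ->
  forall c, Stage G P s c -> exists c', Stage G P' s' c' /\ dist c c' <= delta.
Proof.
move=> H c [T [c0 [HP Hc0 HR HT]]].
have [T' [HP' HD]] := H T HP.
have [c' [H1 H2 H3]] := Sim HR HT (cadd T' s').
exists c'; split.
  by exists T', (cadd T' s'); split.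
apply: leq_trans H3 _; apply: leq_trans HD.
by rewrite leq_eqVlt; apply/orP; left; apply/eqP; apply: eq_bigr => x _; rewrite Hc0.
Qed.

Lemma from_rel L (G : seq (rule L)) rest : forall P P' delta,
  (forall T, P T -> exists T', P' T' /\ dist T T' <= delta) ->
  forall c, TERMfrom G P rest c -> exists c', TERMfrom G P' rest c' /\ dist c c' <= delta.
Proof.
elim: rest => [|s rest IH] P P' delta H //=.
apply: IH; apply: stage_rel => T HT.
have [T' [H1 H2]] := H T HT; exists T'; split => //.
by apply: leq_trans H2; rewrite leq_eqVlt; apply/orP; left; apply/eqP;
  apply: eq_bigr => x _; rewrite /cadd; lia.
Qed.

Lemma from_ne L (G : seq (rule L)) rest : forall P,
  (exists T, P T) -> exists c, TERMfrom G P rest c.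
Proof.
elim: rest => [|s rest IH] P [T HT] //=; first by exists T.
apply: IH.
have [U' [H1 H2 _]] := P2 G (leqnn (size (cadd T s))).
by exists U', T, (cadd T s); split.
Qed.

Theorem mainTheorem4 (n m L : nat)
  (f : {ffun 'I_n -> bool} -> {ffun 'I_m -> bool})
  (G : seq (rule L)) (s0 : config L) (rest : seq (config L))
  (sx : bool -> 'I_n -> 'I_L) (sy : bool -> 'I_m -> 'I_L)
  (cx : bool -> 'I_n -> nat) (cy : bool -> 'I_m -> nat) :
  (* the 2n+2m species are pairwise distinct *)
  (forall a a' i i', sx a i = sx a' i' -> a = a' /\ i = i') ->
  (forall a a' j j', sy a j = sy a' j' -> a = a' /\ j = j') ->
  (forall a a' i j, sx a i <> sy a' j) ->
  (* correctness on every input *)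
  (forall b c, TERMk G (cadd s0 (Xin sx cx b)) rest c ->
     forall j, cy (f b j) j <= c (sy (f b j) j) /\ c (sy (~~ f b j) j) = 0) ->
  forall (b b' : {ffun 'I_n -> bool}) (j0 : 'I_n),
  b j0 != b' j0 -> (forall i, i != j0 -> b i = b' i) ->
  \sum_(j < m | f b j != f b' j) (cy false j + cy true j) <= cx false j0 + cx true j0.
Proof.
move=> _ Hsy _ Hcor b b' j0 Hj0 Hbb'.
set sb := cadd s0 (Xin sx cx b); set sb' := cadd s0 (Xin sx cx b').
have [cb Hcb] : exists c, TERMk G sb rest c.
  by apply: from_ne; exists (fun _ => 0).
have [cb' [Hcb' HD]] : exists c', TERMk G sb' rest c' /\ dist cb c' <= dist sb sb'.
  rewrite /TERMk TERMfrom_cons in Hcb *.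
  apply: (from_rel (P := Stage G (fun c => forall x, c x = 0) sb)) Hcb => T HT.
  apply: (stage_rel (P := fun c => forall x, c x = 0)) HT => T0 HT0.
  exists T0; split => //; rewrite leq_eqVlt; apply/orP; left; apply/eqP.
  by apply: eq_bigr => x _; rewrite /cadd HT0.
have Hsb : dist sb sb' <= cx false j0 + cx true j0.
  apply: (@leq_trans (\sum_(s < L) ((s == sx (b j0) j0) * cx (b j0) j0
                               + (s == sx (b' j0) j0) * cx (b' j0) j0))).
    apply: leq_sum => s _.
    rewrite /sb /sb' /cadd /Xin.
    rewrite (bigD1 j0 (P := xpredT) (F := fun i => (s == sx (b i) i) * cx (b i) i)) //=.
    rewrite (bigD1 j0 (P := xpredT) (F := fun i => (s == sx (b' i) i) * cx (b' i) i)) //=.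
    have -> : \sum_(i < n | i != j0) (s == sx (b' i) i) * cx (b' i) i =
              \sum_(i < n | i != j0) (s == sx (b i) i) * cx (b i) i.
      by apply: eq_bigr => i Hi; rewrite Hbb'.
    move: ((s == sx (b j0) j0) * cx (b j0) j0) ((s == sx (b' j0) j0) * cx (b' j0) j0) (\sum_(i < n | i != j0) (s == sx (b i) i) * cx (b i) i) (s0 s) => *; lia.
  rewrite big_split /= !sum_ind.
  by move: Hj0; case: (b j0); case: (b' j0) => //= _; rewrite addnC.
apply: leq_trans Hsb; apply: leq_trans HD.
pose g := fun s => cb s - cb' s + (cb' s - cb s).
apply: (@leq_trans (\sum_(j < m | f b j != f b' j) (g (sy false j) + g (sy true j)))).
  apply: leq_sum => j Hj.
  have [A1 A2] := Hcor b cb Hcb j.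
  have [B1 B2] := Hcor b' cb' Hcb' j.
  rewrite /g.
  move: Hj A1 A2 B1 B2; case: (f b j); case: (f b' j) => //= _; lia.
apply: (@leq_trans (\sum_(j < m) (g (sy false j) + g (sy true j)))).
  by rewrite [X in _ <= X](bigID (fun j => f b j != f b' j)) /= leq_addr.
rewrite big_split /= addnC.
have -> : \sum_(i < m) g (sy true i) + \sum_(i < m) g (sy false i) =
          \sum_(p : bool * 'I_m) g (sy p.1 p.2).
  by rewrite -(pair_big xpredT xpredT (fun a j => g (sy a j))) big_bool.
have Hinj : {in [set: bool * 'I_m] &, injective (fun p : bool * 'I_m => sy p.1 p.2)}.
  move=> [a j] [a' j'] _ _ /= /Hsy [-> ->] //.
have := big_imset (aop := addn) g Hinj.
rewrite /= => Heq.
have -> : \sum_(p : bool * 'I_m) g (sy p.1 p.2) = \sum_(p in [set: bool * 'I_m]) g (sy p.1 p.2).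
  by apply: eq_bigl => p; rewrite in_setT.
rewrite -Heq /dist -/g.
rewrite [X in _ <= X](bigID (mem [set sy p.1 p.2 | p in [set: bool * 'I_m]])) /=.
exact: leq_addr.
Qed.
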